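(* Let $d\ge 1$ and $n\ge d+2$. Any linear automorphism ${\bf A}$ of $M_{d,n}$ is a linear automorphism of $M_{1,n}$.
   Context: Let $N=\binom n2$, coordinates of $\mathbb C^N$ indexed by edges $\{i,j\}$ of $K_n$. For a complex configuration ${\bf p}$ of $n$ points in $\mathbb C^d$, $m({\bf p})$ has coordinates $m_{ij}=\sum_{k=1}^d({\bf p}_i^k-{\bf p}_j^k)^2$ (no conjugation); $M_{d,n}\subset\mathbb C^N$ is the image of $m$ over all complex configurations in $\mathbb C^d$ (and $M_{1,n}$ the analogous image for configurations in $\mathbb C^1$). A linear automorphism of a variety $V\subset\mathbb C^N$ is a non-singular $N\times N$ complex matrix mapping $V$ bijectively onto itself. *)

(* Defs.v *)
From HB Require Import structures.
From mathcomp Require Import all_boot all_order all_algebra.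
From mathcomp Require Import complex.
From mathcomp Require Import reals.
Set Implicit Arguments. Unset Strict Implicit. Unset Printing Implicit Defensive.
Import Order.TTheory GRing.Theory Num.Theory.
Local Open Scope ring_scope.

(* Edges {i,j} of K_n, represented as ordered pairs (i,j) with i < j. *)
Definition edge (n : nat) := {x : 'I_n * 'I_n | (x.1 < x.2)%N}.

(* N = binom n 2 = number of edges; coordinates of C^N are indexed by
   'I_(nedges n), identified with edges via enum_val / enum_rank. *)
Definition nedges (n : nat) : nat := #|{: edge n}|.

(* A complex configuration of n points in C^d: p i k = k-th coordinate of p_i. *)
Definition config (C : Type) (d n : nat) := 'I_n -> 'I_d -> C.

(* The measurement map m(p) (no conjugation), as a column vector of C^N. *)
Definition mmap (R : realType) (d n : nat) (p : config R[i] d n)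
  : 'cV[R[i]]_(nedges n) :=
  \col_(e < nedges n)
     let ij := val (enum_val e) in
     \sum_(k < d) (p ij.1 k - p ij.2 k) ^+ 2.

Definition Mdn (R : realType) (d n : nat) : 'cV[R[i]]_(nedges n) -> Prop :=
  fun v => exists p : config R[i] d n, v = mmap p.

Arguments Mdn {R} d n _.

(* A linear automorphism of V: a non-singular N x N matrix mapping V
   bijectively onto V (injectivity is automatic from non-singularity). *)
Definition lin_aut (R : realType) (N : nat) (V : 'cV[R[i]]_N -> Prop)
  (A : 'M[R[i]]_N) : Prop :=
  A \in unitmx /\
  (forall v, V v -> V (A *m v)) /\
  (forall w, V w -> exists2 v, V v & A *m v = w).

(* Main.v *)
Require Import Defs.
From HB Require Import structures.
From mathcomp Require Import all_boot all_order all_algebra.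
From mathcomp Require Import complex.
From mathcomp Require Import reals.
From mathcomp Require Import ring zify.
Set Implicit Arguments. Unset Strict Implicit. Unset Printing Implicit Defensive.
Import Order.TTheory GRing.Theory Num.Theory.
Local Open Scope ring_scope.

Definition sel (R : realType) (n : nat) (i j : 'I_n) : 'rV[R[i]]_(nedges n) :=
  \row_e ((val (enum_val e) == (i, j)) || (val (enum_val e) == (j, i)))%:R.

Definition xv (R : realType) (n : nat) (X : 'cV[R[i]]_(nedges n)) (i j : 'I_n) : R[i] :=
  (sel R i j *m X) 0 0.

Definition gram (R : realType) (n : nat) (b : 'I_n) (X : 'cV[R[i]]_(nedges n)) : 'M[R[i]]_n :=
  \matrix_(i, j) (2^-1 * (xv X b i + xv X b j - xv X i j)).

Lemma sel_sym (R : realType) (n : nat) (i j : 'I_n) : sel R i j = sel R j i.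
Proof. by apply/matrixP => a e; rewrite !mxE orbC. Qed.

Lemma sel_diag (R : realType) (n : nat) (i : 'I_n) : sel R i i = 0.
Proof.
apply/matrixP => a e; rewrite !mxE orbb.
case: (enum_val e) => [[x y] /= h].
case: eqP => // -[ex ey]; subst; by rewrite ltnn in h.
Qed.

Lemma xv_sym (R : realType) (n : nat) (X : 'cV[R[i]]_(nedges n)) i j : xv X i j = xv X j i.
Proof. by rewrite /xv sel_sym. Qed.

Lemma xv_diag (R : realType) (n : nat) (X : 'cV[R[i]]_(nedges n)) i : xv X i i = 0.
Proof. by rewrite /xv sel_diag mul0mx mxE. Qed.

Lemma xvE (R : realType) (n : nat) (X : 'cV[R[i]]_(nedges n)) (e : 'I_(nedges n)) :
  xv X (val (enum_val e)).1 (val (enum_val e)).2 = X e 0.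
Proof.
rewrite /xv mxE (bigD1 e) //= big1 ?addr0.
  rewrite mxE; case: (enum_val e) => [[x y] /= h].
  by rewrite eqxx /= mul1r.
move=> e' ne'; rewrite mxE.
case: eqP => [h|_] /=.
  have : enum_val e' = enum_val e by apply: val_inj; rewrite h -surjective_pairing.
  by move/enum_val_inj => ee; rewrite ee eqxx in ne'.
case: eqP => [h|_] /=; last by rewrite mul0r.
case: (enum_val e') h => [[x y] /= h'].
case: (enum_val e) => [[x' y'] /= h''] [ex ey]; subst.
by move: (ltn_trans h' h''); rewrite ltnn.
Qed.

Lemma xv_lin (R : realType) (n : nat) (X Y : 'cV[R[i]]_(nedges n)) (t : R[i]) i j :
  xv (X + t *: Y) i j = xv X i j + t * xv Y i j.
Proof. by rewrite /xv mulmxDr -scalemxAr !mxE. Qed.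

Lemma gram_lin (R : realType) (n : nat) b (X Y : 'cV[R[i]]_(nedges n)) (t : R[i]) :
  gram b (X + t *: Y) = gram b X + t *: gram b Y.
Proof. apply/matrixP => i j; rewrite !mxE !xv_lin; ring. Qed.

Lemma xv_mmap_lt (R : realType) (d n : nat) (p : config R[i] d n) (i j : 'I_n) :
  (i < j)%N -> xv (mmap p) i j = \sum_(k < d) (p i k - p j k) ^+ 2.
Proof.
move=> h.
pose e : 'I_(nedges n) := enum_rank (exist (fun x : 'I_n * 'I_n => (x.1 < x.2)%N) (i, j) h : edge n).
have := xvE (mmap p) e.
by rewrite /e enum_rankK /= => ->; rewrite mxE enum_rankK.
Qed.

Lemma xv_mmap (R : realType) (d n : nat) (p : config R[i] d n) (i j : 'I_n) :
  xv (mmap p) i j = \sum_(k < d) (p i k - p j k) ^+ 2.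
Proof.
case: (ltngtP i j) => h.
- exact: xv_mmap_lt.
- rewrite xv_sym xv_mmap_lt //; apply: eq_bigr => k _.
  by rewrite -sqrrN opprB.
- have -> : i = j by apply: val_inj.
  rewrite xv_diag big1 // => k _; by rewrite subrr expr0n.
Qed.

Definition Qm (R : realType) (d n : nat) (p : config R[i] d n) (b : 'I_n) : 'M[R[i]]_(n, d) :=
  \matrix_(i, k) (p i k - p b k).

Lemma gram_mmap (R : realType) (d n : nat) (p : config R[i] d n) (b : 'I_n) :
  gram b (mmap p) = Qm p b *m (Qm p b)^T.
Proof.
apply/matrixP => i j; rewrite !mxE !xv_mmap.
rewrite -big_split -sumrB /= mulr_sumr; apply: eq_bigr => k _.
rewrite !mxE; field; by rewrite ?pnatr_eq0.
Qed.

Definition cfg (R : realType) (r n : nat) (M : 'M[R[i]]_(n, r)) : config R[i] r n :=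
  fun i k => M i k.

Lemma gram_xv (R : realType) (n : nat) b (X : 'cV[R[i]]_(nedges n)) i j :
  xv X i j = gram b X i i + gram b X j j - 2 * gram b X i j.
Proof. rewrite !mxE !xv_diag; field; by rewrite ?pnatr_eq0. Qed.

Lemma VG (R : realType) (r n : nat) (b : 'I_n) (X : 'cV[R[i]]_(nedges n)) :
  Mdn r n X <-> exists M : 'M[R[i]]_(n, r), gram b X = M *m M^T.
Proof.
split.
  by case=> p ->; exists (Qm p b); rewrite gram_mmap.
case=> M hM; exists (cfg M); apply/matrixP => e z.
rewrite ord1 -xvE mxE (gram_xv b) hM !mxE -big_split /= mulr_sumr -sumrB.
apply: eq_bigr => k _; rewrite !mxE /cfg; ring.
Qed.

Lemma bil_delta (R : realType) (n : nat) (G : 'M[R[i]]_n) (i j : 'I_n) :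
  ((delta_mx 0 i : 'rV[R[i]]_n) *m G *m (delta_mx 0 j : 'rV[R[i]]_n)^T) 0 0 = G i j.
Proof. by rewrite -rowE trmx_delta -colE !mxE. Qed.

Lemma bilD (R : realType) (n : nat) (G : 'M[R[i]]_n) (u v w : 'rV[R[i]]_n) :
  ((u + v) *m G *m w^T) = u *m G *m w^T + v *m G *m w^T.
Proof. by rewrite mulmxDl mulmxDl. Qed.

Lemma bilDr (R : realType) (n : nat) (G : 'M[R[i]]_n) (u v w : 'rV[R[i]]_n) :
  (w *m G *m (u + v)^T) = w *m G *m u^T + w *m G *m v^T.
Proof. by rewrite linearD /= mulmxDr. Qed.

Lemma addmx00 (R : realType) (A B : 'M[R[i]]_1) : (A + B) 0 0 = A 0 0 + B 0 0.
Proof. by rewrite mxE. Qed.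

Lemma POL (R : realType) (n : nat) (G : 'M[R[i]]_n) :
  G^T = G -> G != 0 -> exists u : 'rV[R[i]]_n, (u *m G *m u^T) 0 0 != 0.
Proof.
move=> hs hG.
have [i [j hij]] : exists i j, G i j != 0.
  case: (boolP [exists i, exists j, G i j != 0]).
    by case/existsP => i /existsP [j h]; exists i, j.
  move=> /negP hn; case/negP: hG; apply/eqP/matrixP => i j; rewrite mxE.
  apply/eqP; apply/negPn/negP => h; apply: hn; apply/existsP; exists i; apply/existsP; exists j; exact: h.
case: (boolP (G i i != 0)) => hii.
  by exists (delta_mx 0 i : 'rV[R[i]]_n); rewrite bil_delta.
case: (boolP (G j j != 0)) => hjj.
  by exists (delta_mx 0 j : 'rV[R[i]]_n); rewrite bil_delta.
move/negPn/eqP: hii => hii; move/negPn/eqP: hjj => hjj.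
have hji : G j i = G i j by rewrite -[in RHS]hs mxE.
exists ((delta_mx 0 i : 'rV[R[i]]_n) + delta_mx 0 j).
rewrite bilD !bilDr !addmx00 !bil_delta hii hjj hji add0r addr0.
by rewrite -mulr2n mulrn_eq0 negb_or /= hij.
Qed.

Lemma rowmxMtr (R : realType) (n r : nat) (A : 'M[R[i]]_(n, 1)) (B : 'M[R[i]]_(n, r)) :
  row_mx A B *m (row_mx A B)^T = A *m A^T + B *m B^T.
Proof. by rewrite tr_row_mx mul_row_col. Qed.

Lemma FL (R : realType) (n r : nat) (G : 'M[R[i]]_n) :
  G^T = G -> (\rank G <= r)%N -> exists M : 'M[R[i]]_(n, r), G = M *m M^T.
Proof.
elim: r G => [|r IH] G hs hr.
  exists 0; rewrite mul0mx; apply/eqP; rewrite -mxrank_eq0; by rewrite leqn0 in hr.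
case: (eqVneq G 0) => [->|hG0].
  by exists 0; rewrite mul0mx.
have [u hu] := POL hs hG0.
set c := (u *m G *m u^T) 0 0 in hu.
set g := u *m G.
have hGu : G *m u^T = g^T by rewrite /g trmx_mul hs.
have hgu : g *m u^T = c%:M by apply/matrixP => a b; rewrite !ord1 /c !mxE eqxx mulr1n.
pose T : 'M[R[i]]_n := 1%:M - c^-1 *: (u^T *m g).
have hGT : G *m T = G - c^-1 *: (g^T *m g).
  by rewrite /T mulmxBr mulmx1 -scalemxAr mulmxA hGu.
have hgT : g *m T = 0.
  rewrite /T mulmxBr mulmx1 -scalemxAr mulmxA hgu mul_scalar_mx scalerA mulVf //.
  by rewrite scale1r subrr.
have gnz : g != 0.
  apply/eqP => h; move: hu; by rewrite /c -/g h mul0mx mxE eqxx.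
have hrk : (\rank (G *m T) <= r)%N.
  have h1 := mxrank_mul_ker G T.
  have h2 : (g <= G :&: kermx T)%MS.
    by rewrite sub_capmx submxMl /=; apply/sub_kermxP.
  have h3 : (1 <= \rank (G :&: kermx T))%N.
    apply: leq_trans (mxrankS h2); by rewrite lt0n mxrank_eq0.
  have h4 : (\rank (G *m T) + 1 <= \rank G)%N by rewrite -[X in (_ <= X)%N]h1 leq_add2l.
  rewrite -ltnS; apply: leq_trans hr; by rewrite -addn1.
have hs' : (G *m T)^T = G *m T.
  by rewrite hGT linearB /= linearZ /= trmx_mul trmxK hs.
have [M' hM'] := IH _ hs' hrk.
pose s := sqrtC (c^-1).
exists (row_mx (s *: g^T) M').
apply/esym; apply: eq_trans (rowmxMtr _ _) _.
rewrite -hM' hGT linearZ /= trmxK -scalemxAr -scalemxAl scalerA.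
by rewrite -expr2 sqrtCK addrC subrK.
Qed.

Lemma gram_sym (R : realType) (n : nat) b (X : 'cV[R[i]]_(nedges n)) : (gram b X)^T = gram b X.
Proof. apply/matrixP => i j; rewrite !mxE (xv_sym X i j); ring. Qed.

Lemma SUM (R : realType) (d n : nat) (p : config R[i] d n) :
  mmap p = \sum_(k < d) mmap (fun i (_ : 'I_1) => p i k).
Proof.
apply/matrixP => e z; rewrite summxE !mxE; apply: eq_bigr => k _.
by rewrite !mxE /= big_ord1.
Qed.

Lemma ALL (R : realType) (n : nat) (b : 'I_n) (Y : 'cV[R[i]]_(nedges n)) : Mdn n n Y.
Proof.
apply/(VG n b).
have [M hM] := FL (gram_sym b Y) (rank_leq_col (gram b Y)).
by exists M.
Qed.

Lemma SPAN (R : realType) (n : nat) (b : 'I_n) (a : 'rV[R[i]]_(nedges n)) :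
  (forall Z, Mdn 1 n Z -> (a *m Z) 0 0 = 0) -> a = 0.
Proof.
move=> H; apply/matrixP => z e; rewrite ord1 mxE.
have [p hp] := ALL b (delta_mx e 0 : 'cV[R[i]]_(nedges n)).
have <- : (a *m (delta_mx e 0 : 'cV[R[i]]_(nedges n))) 0 0 = a 0 e by rewrite -colE !mxE.
rewrite hp SUM mulmx_sumr summxE big1 // => k _.
by apply: H; eexists.
Qed.

Lemma EASY (R : realType) (k n : nat) (b : 'I_n) (X Z : 'cV[R[i]]_(nedges n)) (t : R[i]) :
  Mdn k n X -> Mdn 1 n Z -> Mdn k.+1 n (X + t *: Z).
Proof.
move=> /(VG k b) [M hM] /(VG 1 b) [z hz].
apply/(VG k.+1 b); exists (row_mx (sqrtC t *: z) M).
rewrite rowmxMtr gram_lin hM hz linearZ /= -scalemxAr -scalemxAl scalerA -expr2 sqrtCK.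
by rewrite addrC.
Qed.

Lemma KER (R : realType) (n k : nat) (b : 'I_n) (G : 'M[R[i]]_n) :
  (\rank G <= k.+1)%N -> (k.+3 <= n)%N ->
  exists u : 'rV[R[i]]_n, [/\ u *m G = 0, u 0 b = 0 & u != 0].
Proof.
move=> hr hn.
set K := kermx G.
set c : 'cV[R[i]]_n := delta_mx b 0.
have h1 := mxrank_mul_ker K c.
have h2 : (\rank (K *m c) <= 1)%N by apply: rank_leq_col.
have h3 := mxrank_ker G.
have h4 : (1 <= \rank (K :&: kermx c))%N.
  move: h1 h2 h3 hr; rewrite -/K.
  set x := \rank (K *m c); set y := \rank (K :&: kermx c); set zK := \rank K; set g := \rank G.
  lia.
have : (K :&: kermx c)%MS != 0 by rewrite -mxrank_eq0 -lt0n.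
case/rowV0Pn => v hv vnz.
exists v; split => //.
  apply/sub_kermxP; exact: submx_trans hv (capmxSl _ _).
have /sub_kermxP hc := submx_trans hv (capmxSr _ _).
have : (v *m c) 0 0 = v 0 b by rewrite /c -colE !mxE.
by rewrite hc mxE => <-.
Qed.

Definition Sm (R : realType) (n : nat) (b i j : 'I_n) : 'rV[R[i]]_(nedges n) :=
  2^-1 *: (sel R b i + sel R b j - sel R i j).

Arguments Sm {R n}.

Lemma addsub00 (R : realType) (A B C : 'M[R[i]]_1) : (A + B - C) 0 0 = A 0 0 + B 0 0 - C 0 0.
Proof. by rewrite !mxE. Qed.

Lemma gramS (R : realType) (n : nat) (b : 'I_n) (Y : 'cV[R[i]]_(nedges n)) i j :
  gram b Y i j = (Sm b i j *m Y) 0 0.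
Proof.
rewrite [LHS]mxE /Sm -scalemxAl mulmxBl mulmxDl [RHS]mxE.
by rewrite addsub00.
Qed.

Lemma PHI (R : realType) (n : nat) (b : 'I_n) (u : 'rV[R[i]]_n) :
  exists a : 'rV[R[i]]_(nedges n), forall Y, (u *m gram b Y *m u^T) 0 0 = (a *m Y) 0 0.
Proof.
exists (\sum_i \sum_j (u 0 i * u 0 j) *: Sm b i j) => Y.
rewrite mulmx_suml summxE mxE.
under eq_bigr do rewrite mxE.
under [RHS]eq_bigr do rewrite mulmx_suml summxE.
rewrite exchange_big /=; apply: eq_bigr => j _.
rewrite mulr_suml; apply: eq_bigr => i _.
by rewrite -scalemxAl [RHS]mxE -gramS [u^T _ _]mxE; ring.
Qed.

Lemma PZ (R : realType) (p : {poly R[i]}) : (forall t, t != 0 -> p.[t] = 0) -> p = 0.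
Proof.
move=> H; apply/eqP; apply/negPn/negP => hp.
pose rs := mkseq (fun k => (k.+1)%:R : R[i]) (size p).
have hall : all (root p) rs.
  apply/allP => x /mapP [k _ ->]; apply/rootP; apply: H.
  by rewrite pnatr_eq0.
have hu : uniq rs.
  by apply: mkseq_uniq => x y /eqP; rewrite eqr_nat eqSS => /eqP.
have := max_poly_roots hp hall hu.
by rewrite size_mkseq ltnn.
Qed.

Lemma horner_map_polyC (R : realType) (m n : nat) (A : 'M[R[i]]_(m, n)) (t : R[i]) :
  map_mx (horner_eval t) (map_mx polyC A) = A.
Proof. by apply/matrixP => a c; rewrite !mxE /horner_eval hornerC. Qed.

Lemma HARD (R : realType) (n k : nat) (b : 'I_n) (X0 Y : 'cV[R[i]]_(nedges n)) (u : 'rV[R[i]]_n) :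
  ~~ (\rank (gram b X0) <= k)%N -> Mdn k.+1 n X0 -> u *m gram b X0 = 0 ->
  (forall t, Mdn k.+1 n (X0 + t *: Y)) -> (u *m gram b Y *m u^T) 0 0 = 0.
Proof.
move=> hrk hX0 huG hY.
set G := gram b X0 in hrk huG *; set H := gram b Y.
have [P hP] := (VG k.+1 b X0).1 hX0.
have rG : (k.+1 <= \rank G)%N by rewrite ltnNge.
have fullP : row_full P.
  rewrite /row_full eqn_leq rank_leq_col /=.
  apply: leq_trans rG _; rewrite /G hP; exact: mxrankM_maxl.
have [B hB] := row_fullP fullP.
have hBG : B *m G *m B^T = 1%:M.
  by rewrite /G hP !mulmxA hB mul1mx -trmx_mul hB trmx1.
have hGu : G *m u^T = 0.
  by rewrite -[G]gram_sym -trmx_mul huG trmx0.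
pose h := u *m H *m u^T.
pose f1 := u *m H *m B^T.
pose f2 := B *m H *m u^T.
pose E := B *m H *m B^T.
pose N' (t : R[i]) : 'M[R[i]]_(1 + k.+1) := block_mx h f1 (t *: f2) (1%:M + t *: E).
have claim1 : forall t, t != 0 -> \det (N' t) = 0.
  move=> t t0.
  pose C : 'M[R[i]]_(1 + k.+1, n) := col_mx u B.
  have e1 : C *m (G + t *: H) *m C^T = block_mx (t%:M) 0 0 1%:M *m N' t.
    rewrite /C tr_col_mx mul_col_mx mul_col_row mulmx_block.
    rewrite !mulmxDr !mulmxDl -!scalemxAr -!scalemxAl huG -[B *m G *m u^T]mulmxA hGu hBG.
    rewrite !mul0mx !mulmx0 !mul1mx !add0r !mul_scalar_mx.
    by rewrite !scaler0 !addr0.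
  have e2 : (\rank (C *m (G + t *: H) *m C^T) <= k.+1)%N.
    apply: leq_trans (mxrankM_maxl _ _) _.
    apply: leq_trans (mxrankM_maxr _ _) _.
    have [M hM] := (VG k.+1 b _).1 (hY t).
    rewrite /G /H -gram_lin hM.
    apply: leq_trans (mxrankM_maxl _ _) _; exact: rank_leq_col.
  have e3 : \det (C *m (G + t *: H) *m C^T) = 0.
    apply/eqP; rewrite -[_ == 0]negbK -unitfE -unitmxE -row_free_unit.
    apply/negP; rewrite /row_free => /eqP he.
    by move: e2; rewrite he ltnn.
  move: e3; rewrite e1 det_mulmx det_ublock det_scalar det1 expr1 mulr1.
  by move/eqP; rewrite mulf_eq0 (negbTE t0) /= => /eqP.
pose Np : 'M[{poly R[i]}]_(1 + k.+1) :=
  block_mx (map_mx polyC h) (map_mx polyC f1) ('X *: map_mx polyC f2) (1%:M + 'X *: map_mx polyC E).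
have claim2 : forall t, (\det Np).[t] = \det (N' t).
  move=> t.
  rewrite -horner_evalE -det_map_mx /Np map_block_mx map_mxD map_mx1 !map_mxZ.
  by rewrite !horner_map_polyC /= /horner_eval hornerX.
have : \det Np = 0.
  apply: PZ => t t0; rewrite claim2; exact: claim1.
move/(congr1 (fun p => p.[0])); rewrite claim2 horner0 /N' !scale0r addr0.
by rewrite det_ublock det1 mulr1 det_mx11.
Qed.

Lemma MONO (R : realType) (n k : nat) (b : 'I_n) (X : 'cV[R[i]]_(nedges n)) :
  Mdn k n X -> Mdn k.+1 n X.
Proof.
move=> /(VG k b) [M hM]; apply/(VG k.+1 b).
exists (row_mx (0 : 'M[R[i]]_(n, 1)) M).
by rewrite rowmxMtr mul0mx add0r.
Qed.

Lemma FWD (R : realType) (n k : nat) (b : 'I_n) (A : 'M[R[i]]_(nedges n)) :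
  A \in unitmx -> (forall v, Mdn k.+1 n v -> Mdn k.+1 n (A *m v)) -> (k.+3 <= n)%N ->
  forall X, Mdn k n X -> Mdn k n (A *m X).
Proof.
move=> hA hmap hn X hX.
have hAX : Mdn k.+1 n (A *m X) by apply: hmap; exact: MONO b _ _.
case: (boolP (\rank (gram b (A *m X)) <= k)%N) => hr.
  have [M hM] := FL (gram_sym b _) hr; apply/(VG k b); by exists M.
exfalso.
have [M0 hM0] := (VG k.+1 b _).1 hAX.
have rk : (\rank (gram b (A *m X)) <= k.+1)%N.
  rewrite hM0; apply: leq_trans (mxrankM_maxl _ _) _; exact: rank_leq_col.
have [u [huG hub hu0]] := KER b rk hn.
have [j hj] : exists j, u 0 j != 0.
  case: (boolP [exists j, u 0 j != 0]).
    by case/existsP => j hj; exists j.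
  move=> /negP hn'; case/negP: hu0; apply/eqP/matrixP => z j; rewrite ord1 mxE.
  apply/eqP; apply/negPn/negP => h; apply: hn'; apply/existsP; exists j; exact: h.
have [a ha] := PHI b u.
have hzero : a *m A = 0.
  apply: (SPAN b) => Z hZ.
  rewrite -mulmxA -ha.
  apply: (HARD hr hAX huG) => t.
  rewrite scalemxAr -mulmxDr; apply: hmap; exact: EASY.
have ha0 : a = 0 by rewrite -[a]mulmx1 -(mulmxV hA) mulmxA hzero mul0mx.
pose q : config R[i] 1 n := fun i _ => (i == j)%:R.
have hbj : (b == j) = false.
  by apply/negP => /eqP hbj; move: hj; rewrite -hbj hub eqxx.
have hv : (u *m Qm q b) 0 0 = u 0 j.
  rewrite mxE (bigD1 j) //= big1 ?addr0.
    by rewrite mxE /q eqxx hbj subr0 mulr1.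
  by move=> i hi; rewrite mxE /q (negbTE hi) hbj subrr mulr0.
have := ha (mmap q); rewrite ha0 mul0mx gram_mmap mulmxA -[_ *m u^T]mulmxA -trmx_mul.
rewrite [in X in X = _]mxE big_ord1 [(u *m Qm q b)^T _ _]mxE hv mxE.
by move/eqP; rewrite mulf_eq0 orbb (negbTE hj).
Qed.

Lemma STEP (R : realType) (n k : nat) (A : 'M[R[i]]_(nedges n)) :
  (k.+3 <= n)%N -> lin_aut (Mdn k.+1 n) A -> lin_aut (Mdn k n) A.
Proof.
move=> hn [hA [hmap hsurj]].
have b : 'I_n := Ordinal (leq_trans (isT : 0 < k.+3)%N hn).
split => //; split.
  move=> v hv; exact: (FWD b hA hmap hn hv).
move=> w hw.
have hAi : invmx A \in unitmx by rewrite unitmx_inv.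
have hmapi : forall v, Mdn k.+1 n v -> Mdn k.+1 n (invmx A *m v).
  move=> v /hsurj [v' hv' <-]; by rewrite mulKmx.
exists (invmx A *m w).
  exact: (FWD b hAi hmapi hn hw).
by rewrite mulKVmx.
Qed.

Lemma DOWN (R : realType) (n : nat) (A : 'M[R[i]]_(nedges n)) (m : nat) :
  (1 <= m)%N -> (m + 2 <= n)%N -> lin_aut (Mdn m n) A -> lin_aut (Mdn 1 n) A.
Proof.
elim: m => [//|k IH] h1 h2 hl.
case: k IH h1 h2 hl => [//|k] IH h1 h2 hl.
have h3 : (k.+1 + 2 <= n)%N by move: h2; rewrite !addn2; apply: ltnW.
apply: IH => //.
apply: (STEP _ hl); move: h2; by rewrite !addn2.
Qed.

Theorem lemma3p8 (R : realType) (d n : nat) (hd : (1 <= d)%N) (hn : (d + 2 <= n)%N)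
  (A : 'M[R[i]]_(nedges n)) :
  lin_aut (Mdn d n) A -> lin_aut (Mdn 1 n) A.
Proof. exact: DOWN hd hn. Qed.
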